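(* Let $\theta\in\mathrm{Irr}(N)$, let $N\le L\le\mathrm{Stab}_G(\tilde\theta)$ and $N\le K\le\mathrm{Stab}_G(\theta)$ with $L$ normalising $K$, let $\Gamma=\Gamma_{K,\tilde\theta}$, and let $\hat\theta$ be a strong extension of $\theta$ to $K$. Then the function $\bar\mu:L/N\to F_K/\Gamma$ associated with $\hat\theta$ is an element of $Z^1(L/N,F_K/\Gamma)$, and its class $[\bar\mu]\in H^1(L/N,F_K/\Gamma)$ is uniquely determined by $\tilde\theta$, i.e. it is independent of the choice of strong extension $\hat\theta$ and of the choice of representative $\theta\in\tilde\theta$.
   Context: $G$ is a profinite group, $N$ an open normal subgroup; $\mathrm{Irr}$, $\mathrm{Lin}$ denote continuous irreducible, resp. degree-one, complex characters; $\tilde\theta=\{\theta\psi|_N:\psi\in\mathrm{Lin}(G)\}$, and $G$ acts on classes via ${}^g\theta(n)=\theta(g^{-1}ng)$. A projective representation of $K$ is $\Pi:K\to\mathrm{GL}_m(\mathbb{C})$ with $\Pi(x)\Pi(y)=\alpha(x,y)\Pi(xy)$; its projective character is $\mathrm{Tr}\circ\Pi$. A strong extension of $\theta$ to $K$ is the projective character of a projective representation $\Pi$ of $K$ with $\Pi(xn)=\Pi(x)\Theta(n)$, $\Pi(nx)=\Theta(n)\Pi(x)$ ($x\in K,n\in N$), $\Theta$ affording $\theta$. $F_K$ is the abelian group (pointwise multiplication) of functions $K/N\to\mathbb{C}^\times$, an $L/N$-module via $(gN\cdot f)(xN)=f(g^{-1}xgN)$. $\Gamma_{K,\tilde\theta}=\{\nu\in\mathrm{Lin}(K/N):\hat\theta\,\varepsilon|_K=\hat\theta\,\nu\text{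 for some }\varepsilon\in\mathrm{Lin}(G)\}$, where $\mathrm{Lin}(K/N)$ are degree-one characters of $K$ trivial on $N$; it is an $L/N$-submodule of $F_K$. Definition of $\bar\mu$: for $g\in L$ choose $\psi_g\in\mathrm{Lin}(G)$ with ${}^g\theta=\theta\psi_g|_N$; then there is $\mu(gN)\in F_K$ with ${}^g\hat\theta=\hat\theta\,\psi_g|_K\,\mu(gN)$ (where ${}^g\hat\theta(x)=\hat\theta(g^{-1}xg)$), and $\bar\mu(gN)=\mu(gN)\Gamma$, which depends only on $gN$ and $\hat\theta$ (not on the choices made). *)

(* Defs.v *)
From HB Require Import structures.
From mathcomp Require Import all_boot all_order all_algebra.
From mathcomp Require Import all_classical all_reals topology.
From mathcomp Require Import complex.
Set Implicit Arguments. Unset Strict Implicit. Unset Printing Implicit Defensive.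
Import Order.TTheory GRing.Theory Num.Theory.
Local Open Scope ring_scope.
Local Open Scope classical_set_scope.

Definition is_profinite_group (G : topologicalType)
    (mul : G -> G -> G) (inv : G -> G) (one : G) : Prop :=
  [/\ (forall x y z, mul x (mul y z) = mul (mul x y) z),
      (forall x, mul one x = x /\ mul x one = x),
      (forall x, mul (inv x) x = one /\ mul x (inv x) = one),
      continuous (fun p : G * G => mul p.1 p.2) /\ continuous inv
    & [/\ compact [set: G], hausdorff_space G & totally_disconnected [set: G]]].

Record profiniteGroup := ProfiniteGroup {
  pg_carrier :> topologicalType;
  pg_mul : pg_carrier -> pg_carrier -> pg_carrier;
  pg_inv : pg_carrier -> pg_carrier;
  pg_one : pg_carrier;
  pg_axioms : is_profinite_group pg_mul pg_inv pg_one }.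

Section Profinite.
Variable G : profiniteGroup.
Local Notation gmul := (@pg_mul G).
Local Notation ginv := (@pg_inv G).
Local Notation gone := (@pg_one G).

Definition is_subgroup (H : set G) : Prop :=
  [/\ H gone, (forall x y, H x -> H y -> H (gmul x y)) & (forall x, H x -> H (ginv x))].

Definition pconj (x g : G) : G := gmul (ginv g) (gmul x g).

Definition is_normal_in (H K : set G) : Prop :=
  forall g x, K g -> H x -> H (pconj x g).

Definition open_normal_subgroup (N : set G) : Prop :=
  [/\ is_subgroup N, open N & is_normal_in N [set: G]].

Definition normalises (L K : set G) : Prop :=
  forall g, L g -> forall x, (K x <-> K (pconj x g)).

Variable R : realType.
Local Notation C := (R[i]).

Definition cont_on (A : set G) (f : G -> C) : Prop :=
  forall x, A x -> forall e : R, 0 < e ->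
    exists U : set G, [/\ open U, U x &
      forall y, A y -> U y -> `|f y - f x| < real_complex R e].

Definition is_rep (A : set G) (m : nat) (rho : G -> 'M[C]_m) : Prop :=
  [/\ (forall x y, A x -> A y -> rho (gmul x y) = rho x *m rho y),
      rho gone = 1%:M
    & forall i j, cont_on A (fun x => rho x i j)].

Definition is_irr_rep (A : set G) (m : nat) (rho : G -> 'M[C]_m) : Prop :=
  [/\ (0 < m)%N, is_rep A rho &
      forall U : 'M[C]_m, (forall x, A x -> stablemx U (rho x)) ->
        U = 0 \/ row_full U].

Definition affords (A : set G) (m : nat) (rho : G -> 'M[C]_m) (chi : G -> C) :=
  forall x, A x -> chi x = \tr (rho x).

(* theta in Irr(A): only the values on A matter *)
Definition is_irr_char (A : set G) (chi : G -> C) : Prop :=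
  exists m (rho : G -> 'M[C]_m), is_irr_rep A rho /\ affords A rho chi.

Definition is_lin_char (A : set G) (psi : G -> C) : Prop :=
  [/\ (forall x y, A x -> A y -> psi (gmul x y) = psi x * psi y),
      (forall x, A x -> psi x != 0) & cont_on A psi].

Definition is_lin_char_mod (K N : set G) (nu : G -> C) : Prop :=
  is_lin_char K nu /\ (forall n, N n -> nu n = 1).

Definition eqOn (A : set G) (f g : G -> C) : Prop := forall x, A x -> f x = g x.

Definition cact (g : G) (f : G -> C) : G -> C := fun x => f (pconj x g).

Definition in_tilde (N : set G) (theta phi : G -> C) : Prop :=
  exists psi, is_lin_char [set: G] psi /\ eqOn N phi (fun n => theta n * psi n).

Definition stab_char (N : set G) (theta : G -> C) : set G :=
  [set g | eqOn N (cact g theta) theta].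

Definition stab_tilde (N : set G) (theta : G -> C) : set G :=
  [set g | (forall phi, in_tilde N theta phi -> in_tilde N theta (cact g phi)) /\
           (forall phi, in_tilde N theta phi ->
              exists phi', in_tilde N theta phi' /\ eqOn N (cact g phi') phi)].

Definition strong_ext (N K : set G) (theta thetahat : G -> C) : Prop :=
  exists m (Pi Theta : G -> 'M[C]_m) (alpha : G -> G -> C),
    [/\ is_rep N Theta /\ affords N Theta theta,
        (forall x, K x -> Pi x \in unitmx),
        (forall x y, K x -> K y -> alpha x y != 0 /\
                      Pi x *m Pi y = alpha x y *: Pi (gmul x y)),
        (forall x n, K x -> N n ->
            Pi (gmul x n) = Pi x *m Theta n /\ Pi (gmul n x) = Theta n *m Pi x)
      & forall x, K x -> thetahat x = \tr (Pi x)].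

(* F_K: functions K/N -> C^x, seen as N-invariant nonvanishing functions on K *)
Definition in_FK (K N : set G) (f : G -> C) : Prop :=
  (forall x, K x -> f x != 0) /\ (forall x n, K x -> N n -> f (gmul x n) = f x).

Definition in_Gamma (K N : set G) (thetahat nu : G -> C) : Prop :=
  is_lin_char_mod K N nu /\
  exists eps, is_lin_char [set: G] eps /\
    eqOn K (fun x => thetahat x * eps x) (fun x => thetahat x * nu x).

Definition eq_mod_Gamma (K N : set G) (thetahat f f' : G -> C) : Prop :=
  exists nu, in_Gamma K N thetahat nu /\ eqOn K f (fun x => f' x * nu x).

Definition mu_data (N K L : set G) (theta thetahat : G -> C)
    (psi mu : G -> G -> C) : Prop :=
  forall g, L g ->
    [/\ is_lin_char [set: G] (psi g),
        eqOn N (cact g theta) (fun n => theta n * psi g n),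
        in_FK K N (mu g)
      & eqOn K (cact g thetahat) (fun x => thetahat x * psi g x * mu g x)].

End Profinite.

(* Main.v *)
Require Import Defs.
From HB Require Import structures.
From mathcomp Require Import all_boot all_order all_algebra.
From mathcomp Require Import all_classical all_reals topology.
From mathcomp Require Import complex.
From Stdlib Require Import Classical IndefiniteDescription.
From mathcomp Require Import zify ring lra.
Import Order.TTheory GRing.Theory Num.Theory.
Local Open Scope ring_scope.
Local Open Scope classical_set_scope.

Set Implicit Arguments. Unset Strict Implicit. Unset Printing Implicit Defensive.

Section LinAlg.
Variable F : fieldType.

Lemma vec_combo m k (f : 'I_k -> 'M[F]_m) (u : 'rV_k) :
  vec_mx (u *m \matrix_i mxvec (f i)) = \sum_i u 0 i *: f i.
Proof.
rewrite mulmx_sum_row linear_sum; apply: eq_bigr => i _.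
by rewrite linearZ /= rowK mxvecK.
Qed.

Lemma tr_delta m (X : 'M[F]_m) i j : \tr (X *m delta_mx j i) = X i j.
Proof.
rewrite /mxtrace (bigD1 i) //= big1 ?addr0.
  rewrite mxE (bigD1 j) //= big1 ?addr0; first by rewrite mxE !eqxx mulr1.
  by move=> l /negbTE nl; rewrite mxE nl mulr0.
move=> l /negbTE nl; rewrite mxE big1 // => p _.
by rewrite mxE nl andbF mulr0.
Qed.

Lemma central_scalar m (Z : 'M[F]_m) (i0 : 'I_m) :
  (forall Y : 'M_m, Z *m Y = Y *m Z) -> Z = (Z i0 i0)%:M.
Proof.
move=> cZ; apply/matrixP => i j.
have Hd : forall a b, Z a a = Z b b.
  move=> a b; have := cZ (delta_mx a b) => /matrixP /(_ a b).
  rewrite !mxE (bigD1 a) //= big1 ?addr0; last first.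
    by move=> p /negbTE np; rewrite mxE np mulr0.
  rewrite (bigD1 b) //= big1 ?addr0; last first.
    by move=> p /negbTE np; rewrite mxE np andbF mul0r.
  by rewrite !mxE !eqxx /= mulr1 mul1r.
rewrite mxE; case: (eqVneq i j) => [<-|nij]; first by rewrite mulr1n (Hd i i0).
rewrite mulr0n; have := cZ (delta_mx j j) => /matrixP /(_ i j).
rewrite !mxE (bigD1 j) //= big1 ?addr0; last first.
  by move=> p /negbTE np; rewrite mxE np mulr0.
rewrite big1 ?mxE; last first.
  by move=> p _; rewrite mxE (negbTE nij) mul0r.
by rewrite !eqxx mulr1.
Qed.

End LinAlg.


Section FinBasis.
Variable F : fieldType.

Lemma fin_basis (X : Type) (x0 : X) d (P : X -> Prop) (h : X -> 'rV[F]_d) :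
  exists k (t : 'I_k -> X), (forall i, P (t i)) /\
     forall x, P x -> (h x <= \matrix_i h (t i))%MS.
Proof.
pose M (s : seq X) := \matrix_(i < size s) h (nth x0 s i).
have hrow s (i : 'I_(size s)) : (h (nth x0 s i) <= M s)%MS.
  by rewrite -(rowK (fun i : 'I_(size s) => h (nth x0 s i)) i) row_sub.
have ext : forall s, (forall i, (i < size s)%N -> P (nth x0 s i)) ->
    ~ (forall x, P x -> (h x <= M s)%MS) ->
    exists s', (forall i, (i < size s')%N -> P (nth x0 s' i)) /\
               (\rank (M s) < \rank (M s'))%N.
  move=> s hP H.
  have [x Hx] := not_all_ex_not _ _ H.
  have [Px nx] := imply_to_and _ _ Hx.
  pose s' := rcons s x.
  have sub1 : (M s <= M s')%MS.
    apply/row_subP => i; rewrite rowK.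
    have ->: nth x0 s i = nth x0 s' (widen_ord (leqnSn _) i) by rewrite nth_rcons /= ltn_ord.
    have := hrow s' (cast_ord (esym (size_rcons s x)) (widen_ord (leqnSn _) i)).
    by [].
  have sub2 : (h x <= M s')%MS.
    have := hrow s' (cast_ord (esym (size_rcons s x)) (@ord_max (size s))).
    by rewrite /= nth_rcons ltnn eqxx.
  exists s'; split.
    move=> i; rewrite size_rcons ltnS leq_eqVlt => /orP[/eqP->|lti].
      by rewrite nth_rcons ltnn eqxx.
    by rewrite nth_rcons lti; apply: hP.
  have := mxrank_leqif_sup sub1 => /leqifP.
  case: ifP => [Hs _|_ lt] //; exfalso; apply: nx; exact: submx_trans sub2 Hs.
suff: forall n s, (d - \rank (M s) <= n)%N ->
   (forall i, (i < size s)%N -> P (nth x0 s i)) ->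
   exists k (t : 'I_k -> X), (forall i, P (t i)) /\
     forall x, P x -> (h x <= \matrix_i h (t i))%MS.
  by move=> /(_ d [::]); apply => //; rewrite leq_subr.
elim=> [|n IH] s hr hP;
  (case: (classic (forall x, P x -> (h x <= M s)%MS)) => [H|H];
    [by exists (size s), (fun i => nth x0 s i); split => // i; apply: hP|]);
  have [s' [hP' lt]] := ext s hP H.
  by exfalso; move: hr; have := rank_leq_col (M s'); lia.
by apply: (IH s') => //; have := rank_leq_col (M s'); lia.
Qed.
End FinBasis.


Section Burnside.
Variable F : numClosedFieldType.
Variables (m k : nat) (E : 'M[F]_(k, m * m)).
Hypothesis m_gt0 : (0 < m)%N.
Hypothesis E1 : (mxvec (1%:M : 'M_m) <= E)%MS.
Hypothesis EM : forall X Y : 'M_m, (mxvec X <= E)%MS -> (mxvec Y <= E)%MS ->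
  (mxvec (X *m Y) <= E)%MS.
Hypothesis Eirr : forall U : 'M_m,
  (forall X, (mxvec X <= E)%MS -> stablemx U X) -> U = 0 \/ row_full U.

Local Notation inA X := (mxvec X <= E)%MS.

Lemma inA_dec X : inA X -> exists u : 'rV_k, X = vec_mx (u *m E).
Proof. by case/submxP => u hu; exists u; rewrite -hu mxvecK. Qed.

Lemma inA_vec (u : 'rV_k) : inA (vec_mx (u *m E)).
Proof. by rewrite vec_mxK submxMl. Qed.

Lemma inA_row i : inA (vec_mx (row i E)).
Proof. by rewrite vec_mxK row_sub. Qed.

Lemma inA_add X Y : inA X -> inA Y -> inA (X + Y).
Proof. by move=> hx hy; rewrite linearD /= addmx_sub. Qed.

Lemma inA_scale a X : inA X -> inA (a *: X).
Proof. by move=> hx; rewrite linearZ /= scalemx_sub. Qed.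

Lemma inA_sub X Y : inA X -> inA Y -> inA (X - Y).
Proof. by move=> hx hy; rewrite -scaleN1r; apply: inA_add => //; apply: inA_scale. Qed.

Lemma vecE_sum (u : 'rV_k) : vec_mx (u *m E) = \sum_i u 0 i *: vec_mx (row i E).
Proof.
rewrite mulmx_sum_row linear_sum; apply: eq_bigr => i _.
by rewrite linearZ.
Qed.

Lemma cyc (v : 'rV[F]_m) : v != 0 -> forall w, exists X, inA X /\ w = v *m X.
Proof.
move=> nv w.
pose V := \matrix_(i < k) (v *m vec_mx (row i E)).
have key (u : 'rV_k) : v *m vec_mx (u *m E) = u *m V.
  rewrite vecE_sum mulmx_sumr mulmx_sum_row; apply: eq_bigr => i _.
  by rewrite rowK scalemxAr.
have stV : forall X, inA X -> stablemx <<V>>%MS X.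
  move=> X hX; rewrite genmxE (eqmxMr _ (genmxE _)).
  apply/row_subP => j; rewrite row_mul rowK -mulmxA.
  have [u ->] := inA_dec (EM (inA_row j) hX).
  by rewrite key submxMl.
have vV : (v <= V)%MS.
  have [u hu] := inA_dec E1.
  by rewrite -[v]mulmx1 hu key submxMl.
case: (Eirr stV) => [V0|Vf].
  have : (v <= <<V>>)%MS by rewrite genmxE.
  by rewrite V0 submx0 (negbTE nv).
have : (w <= V)%MS by rewrite -(genmxE V) submx_full.
case/submxP => u ->; exists (vec_mx (u *m E)); split; first exact: inA_vec.
by rewrite key.
Qed.


Lemma row_nz (T : 'M[F]_m) : T != 0 -> exists i, row i T != 0.
Proof.
move=> nT; apply: NNPP => H; move/negP: nT; apply.
apply/eqP/row_matrixP => i; rewrite row0; apply/eqP; apply: NNPP => ni.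
by apply: H; exists i; apply/negP.
Qed.

Lemma rank_one : exists T, inA T /\ \rank T = 1%N.
Proof.
suff: forall r T, inA T -> (0 < \rank T <= r)%N -> exists T, inA T /\ \rank T = 1%N.
  by move=> /(_ m 1%:M E1); rewrite mxrank1 leqnn m_gt0; apply.
elim=> [|r IH] T hT hr; first by exfalso; lia.
case: (ltnP (\rank T) r.+1) => hle.
  by apply: (IH T hT); lia.
have erT : \rank T = r.+1 by lia.
case: r IH hr hle erT => [|r] IH hr hle erT; first by exists T.
have nT : T != 0 by rewrite -mxrank_eq0 erT.
have [X [hX hne]] : exists X, inA X /\ forall c, T *m X *m T != c *: T.
  apply: NNPP => H.
  have H' : forall X, inA X -> exists c, T *m X *m T = c *: T.
    move=> X hX0; apply: NNPP => H2; apply: H; exists X; split => // c.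
    by apply/eqP => e; apply: H2; exists c.
  have [i ni] := row_nz nT.
  have [j nj] : exists j, ~~ (row j T <= row i T)%MS.
    apply: NNPP => H3.
    have sub : (T <= row i T)%MS.
      apply/row_subP => j; apply: NNPP => nj; apply: H3; exists j; exact/negP.
    have := mxrankS sub; have := rank_leq_row (row i T); lia.
  have [Y [hY eY]] := cyc ni (delta_mx 0 j).
  have [c ec] := H' Y hY.
  move/negP: nj; apply.
  rewrite rowE eY rowE -!mulmxA (mulmxA T) ec -scalemxAr -rowE.
  by rewrite scalemx_sub.
pose M := X *m T.
pose V := row_base T.
have rfV : row_free V by exact: row_base_free.
have stM : stablemx V M.
  rewrite /M mulmxA; apply: submx_trans (submxMl _ _) _.
  by rewrite eq_row_base.
have rpos : (0 < \rank T)%N by rewrite erT.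
have [c ec] := eigenvalue_closed (conjmx V M) rpos.
have [w ew nw] := eigenvalueP ec.
have wsub : (w <= eigenspace (conjmx V M) c)%MS by apply/eigenspaceP.
rewrite sub_eigenspace_conjmx // in wsub.
move/eigenspaceP: wsub => eyM.
pose y := w *m V.
have ny : y != 0 by rewrite /y mulmx_free_eq0.
pose T' := T *m X *m T - c *: T.
have hT' : inA T' by apply: inA_sub; [apply: EM => //; apply: EM|apply: inA_scale].
have nT' : T' != 0 by rewrite subr_eq0; apply: hne.
pose K := M - c%:M.
have eT' : T' = T *m K by rewrite /T' /K mulmxBr mulmxA mul_mx_scalar.
have eqr : \rank T' = \rank (V *m K).
  by rewrite eT'; apply/eqmx_rank/eqmxP; exact: (eqmxMr K (eqmx_sym (eq_row_base T))).
have wk : (w <= kermx (V *m K))%MS.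
  by rewrite sub_kermx /K mulmxA mulmxBr eyM mul_mx_scalar subrr.
have : (0 < \rank (kermx (V *m K)))%N.
  rewrite lt0n mxrank_eq0; apply/eqP => k0; move: wk; rewrite k0 submx0.
  by apply/negP.
rewrite mxrank_ker => hk.
apply: (IH T' hT').
have : (0 < \rank T')%N by rewrite lt0n mxrank_eq0.
have := rank_leq_row V; rewrite eqr; lia.
Qed.


Lemma inA_sum (I : finType) (f : I -> 'M_m) : (forall i, inA (f i)) -> inA (\sum_i f i).
Proof. by move=> h; rewrite linear_sum /=; apply: summx_sub => i _; apply: h. Qed.

Lemma burnside_full : row_full E.
Proof.
have [T [hT rT]] := rank_one.
have nT : T != 0 by rewrite -mxrank_eq0 rT.
have [i0 ny] := row_nz nT.
set y := row i0 T in ny.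
have Ty : (T <= y)%MS.
  have := mxrank_leqif_eq (row_sub i0 T) => /leqifP.
  rewrite rank_rV ny rT /=; case: ifP => [/eqmxP -> _|_]; first exact: submx_refl.
  by rewrite ltnn.
have [x ex] := submxP Ty.
pose C : 'M_(m, k) := \matrix_(j, i) (vec_mx (row i E) *m x) j 0.
have CuE (u : 'rV_k) : C *m u^T = vec_mx (u *m E) *m x.
  apply/matrixP => j l; rewrite ord1 vecE_sum mulmx_suml summxE mxE.
  by apply: eq_bigr => i _; rewrite -scalemxAl !mxE mulrC.
have zCE (z : 'rV_m) (u : 'rV_k) :
    z *m vec_mx (u *m E) *m x = z *m C *m u^T.
  by rewrite -!mulmxA CuE.
have zCent (z : 'rV_m) i : (z *m C) 0 i = (z *m vec_mx (row i E) *m x) 0 0.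
  by rewrite -mulmxA !mxE; apply: eq_bigr => j _; rewrite [C j i]mxE.
have stW : forall X, inA X -> stablemx (kermx C) X.
  move=> X hX; apply/row_subP => l; rewrite row_mul sub_kermx.
  have zC : row l (kermx C) *m C = 0 by apply/eqP; rewrite -sub_kermx row_sub.
  apply/eqP/rowP => i; rewrite zCent.
  have [u eu] := inA_dec (EM hX (inA_row i)).
  by rewrite -(mulmxA _ X) eu zCE zC !mul0mx !mxE.
have [W0|Wf] := Eirr stW.
- have rC : \rank C = m.
    have := mxrank_ker C; rewrite W0 mxrank0 => h.
    have := rank_leq_row C; lia.
  have rfC : row_full C^T by rewrite /row_full mxrank_tr rC.
  have colX : forall j, exists X, inA X /\ X *m x = delta_mx j 0.
    move=> j; have : ((delta_mx 0 j : 'rV_m) <= C^T)%MS by rewrite submx_full.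
    case/submxP => u eu; exists (vec_mx (u *m E)); split; first exact: inA_vec.
    by rewrite -CuE -[C]trmxK -trmx_mul -eu trmx_delta.
  have dA : forall j l, inA (delta_mx j l : 'M_m).
    move=> j l; have [X [hX eX]] := colX j.
    have [Y [hY eY]] := cyc ny (delta_mx 0 l).
    rewrite -(mul_delta_mx (0 : 'I_1)) -eX eY.
    have -> : X *m x *m (y *m Y) = X *m T *m Y by rewrite ex !mulmxA.
    by apply: EM => //; apply: EM.
  rewrite -sub1mx; apply/row_subP => r.
  rewrite -[row r _]vec_mxK (matrix_sum_delta (vec_mx _)).
  apply: inA_sum => j; apply: inA_sum => l; apply: inA_scale; exact: dA.
- exfalso; move/negP: nT; apply.
  have C0 : C = 0.
    by apply/eqP; rewrite -(mul1mx C) -sub_kermx submx_full.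
  have [u eu] := inA_dec E1.
  have : (1%:M : 'M_m) *m x = 0.
    rewrite eu; apply/matrixP => j l; rewrite ord1.
    have := CuE u; move/matrixP => /(_ j 0); rewrite -[_ j 0]/((_ *m _) j 0) => <-.
    by rewrite C0 mul0mx !mxE.
  by rewrite mul1mx ex => ->; rewrite mul0mx.
Qed.

End Burnside.


Section MatHelpers.
Variable F : fieldType.

Lemma unit_nz m (M : 'M[F]_m) : (0 < m)%N -> M \in unitmx -> M != 0.
Proof.
move=> m0 uM; apply/eqP => M0; move: uM; rewrite M0.
by case: m m0 {M M0} => // m _; rewrite unitmxE det0 unitr0.
Qed.

Lemma scalar_cancel m (M : 'M[F]_m) c d : (0 < m)%N -> M \in unitmx ->
  c *: M = d *: M -> c = d.
Proof.
move=> m0 uM e; have := congr1 (fun A => A *m invmx M) e.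
rewrite -!scalemxAl mulmxV // => /matrixP /(_ (Ordinal m0) (Ordinal m0)).
by rewrite !mxE eqxx /= !mulr1n !mulr1.
Qed.

End MatHelpers.

Section Reps.
Variable F : numClosedFieldType.
Variables (T : Type) (mul : T -> T -> T) (inv : T -> T) (one : T).
Variable N : T -> Prop.
Hypothesis N1 : N one.
Hypothesis NM : forall x y, N x -> N y -> N (mul x y).

Definition mrep m (Th : T -> 'M[F]_m) :=
  (forall x y, N x -> N y -> Th (mul x y) = Th x *m Th y) /\ Th one = 1%:M.

Definition spanning m (Th : T -> 'M[F]_m) :=
  exists k (t : 'I_k -> T), (forall i, N (t i)) /\
    row_full (\matrix_i mxvec (Th (t i))).

Definition comb m (Th : T -> 'M[F]_m) (I : finType) (a : I -> F) (t : I -> T) :=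
  \sum_i a i *: Th (t i).

Lemma span_coef m (Th : T -> 'M[F]_m) k (t : 'I_k -> T) :
  row_full (\matrix_i mxvec (Th (t i))) ->
  forall Y, exists a : 'I_k -> F, Y = comb Th a t.
Proof.
move=> rf Y; have : (mxvec Y <= \matrix_i mxvec (Th (t i)))%MS by rewrite submx_full.
case/submxP => u eu; exists (fun i => u 0 i).
by rewrite /comb -vec_combo -eu mxvecK.
Qed.

Lemma nondeg m (Th : T -> 'M[F]_m) : spanning Th ->
  forall X, (forall n, N n -> \tr (X *m Th n) = 0) -> X = 0.
Proof.
move=> [k [t [Nt rf]]] X h.
have hY : forall Y, \tr (X *m Y) = 0.
  move=> Y; have [a ->] := span_coef rf Y.
  rewrite /comb mulmx_sumr linear_sum big1 // => i _.
  by rewrite -scalemxAr linearZ /= h // mulr0.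
by apply/matrixP => i j; rewrite -tr_delta hY mxE.
Qed.

Lemma comb_mulr m (Th : T -> 'M[F]_m) (I : finType) (a : I -> F) t n :
  mrep Th -> (forall i, N (t i)) -> N n ->
  comb Th a t *m Th n = comb Th a (fun i => mul (t i) n).
Proof.
move=> [hM _] Nt Nn; rewrite /comb mulmx_suml; apply: eq_bigr => i _.
by rewrite -scalemxAl hM.
Qed.

Lemma comb_mull m (Th : T -> 'M[F]_m) (I : finType) (a : I -> F) t n :
  mrep Th -> (forall i, N (t i)) -> N n ->
  Th n *m comb Th a t = comb Th a (fun i => mul n (t i)).
Proof.
move=> [hM _] Nt Nn; rewrite /comb mulmx_sumr; apply: eq_bigr => i _.
by rewrite -scalemxAr hM.
Qed.

Lemma comb_mul m (Th : T -> 'M[F]_m) (I J : finType) (a : I -> F) t (b : J -> F) s :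
  mrep Th -> (forall i, N (t i)) -> (forall j, N (s j)) ->
  comb Th a t *m comb Th b s =
  comb Th (fun p : I * J => a p.1 * b p.2) (fun p => mul (t p.1) (s p.2)).
Proof.
move=> [hM _] Nt Ns; rewrite /comb mulmx_suml.
rewrite (eq_bigr (fun i => \sum_j (a i * b j) *: Th (mul (t i) (s j)))).
  by rewrite pair_big /=.
move=> i _; rewrite -scalemxAl mulmx_sumr scaler_sumr; apply: eq_bigr => j _.
by rewrite -scalemxAr scalerA hM.
Qed.

Lemma tr_comb m (Th : T -> 'M[F]_m) (I : finType) (a : I -> F) t :
  \tr (comb Th a t) = \sum_i a i * \tr (Th (t i)).
Proof. by rewrite /comb linear_sum; apply: eq_bigr => i _; rewrite linearZ. Qed.

Section TwoReps.
Variables (m : nat) (Th1 Th2 : T -> 'M[F]_m).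
Hypotheses (r1 : mrep Th1) (r2 : mrep Th2).
Hypothesis tr12 : forall n, N n -> \tr (Th1 n) = \tr (Th2 n).

Lemma WD (I J : finType) (a : I -> F) t (b : J -> F) s :
  spanning Th2 -> (forall i, N (t i)) -> (forall j, N (s j)) ->
  comb Th1 a t = comb Th1 b s -> comb Th2 a t = comb Th2 b s.
Proof.
move=> sp Nt Ns e; apply/eqP; rewrite -subr_eq0; apply/eqP.
apply: (nondeg sp) => n Nn.
rewrite mulmxBl !comb_mulr // linearB /= !tr_comb.
have ee : forall (K : finType) (c : K -> F) (u : K -> T), (forall i, N (u i)) ->
    \sum_i c i * \tr (Th2 (mul (u i) n)) = \tr (comb Th1 c u *m Th1 n).
  move=> K c u Nu; rewrite comb_mulr // tr_comb; apply: eq_bigr => i _.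
  by rewrite tr12 //; apply: NM.
by rewrite !ee // e subrr.
Qed.

Lemma transfer : spanning Th2 -> spanning Th1.
Proof.
move=> sp; have [k [t [Nt rf]]] := sp.
exists k, t; split => //.
set B1 := \matrix_i mxvec (Th1 (t i)).
set B2 := \matrix_i mxvec (Th2 (t i)) in rf.
have sk : (kermx B1 <= kermx B2)%MS.
  apply/row_subP => l; rewrite sub_kermx.
  have : row l (kermx B1) *m B1 = 0 by apply/eqP; rewrite -sub_kermx row_sub.
  set u := row l (kermx B1) => h1.
  have h2 : comb Th1 (fun i => u 0 i) t = comb Th1 (fun i : 'I_0 => 0) (fun _ => one).
    by rewrite /comb -vec_combo h1 linear0 big_ord0.
  have := WD sp Nt (fun _ => N1) h2.
  rewrite /comb -vec_combo big_ord0 => h3.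
  by rewrite -[u *m B2]vec_mxK h3 linear0.
have := mxrankS sk; rewrite !mxrank_ker.
move: rf; rewrite /row_full => /eqP r2e.
have := rank_leq_col B1; have := rank_leq_row B2.
rewrite /row_full; lia.
Qed.

End TwoReps.

Lemma span_scale m (Th : T -> 'M[F]_m) (chi : T -> F) :
  spanning Th -> (forall n, N n -> chi n != 0) ->
  spanning (fun n => chi n *: Th n).
Proof.
move=> [k [t [Nt rf]]] hc; exists k, t; split => //.
rewrite -sub1mx; apply: submx_trans _ ; first by rewrite sub1mx; exact: rf.
apply/row_subP => i; rewrite rowK.
have -> : mxvec (Th (t i)) = (chi (t i))^-1 *: mxvec (chi (t i) *: Th (t i)).
  by rewrite linearZ scalerA mulVf ?hc // scale1r.
apply: scalemx_sub.
by rewrite -(rowK (fun i => mxvec (chi (t i) *: Th (t i))) i) row_sub.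
Qed.

Lemma irr_spanning m (rho : T -> 'M[F]_m) : (0 < m)%N -> mrep rho ->
  (forall U : 'M_m, (forall x, N x -> stablemx U (rho x)) -> U = 0 \/ row_full U) ->
  spanning rho.
Proof.
move=> m0 rr irr.
have [k [t [Nt hE]]] := fin_basis one N (fun n => mxvec (rho n)).
exists k, t; split => //.
set E := \matrix_i mxvec (rho (t i)) in hE *.
have dec : forall X, (mxvec X <= E)%MS -> exists a : 'I_k -> F, X = comb rho a t.
  move=> X; case/submxP => u eu; exists (fun i => u 0 i).
  by rewrite /comb -vec_combo -eu mxvecK.
have inc : forall (I : finType) (a : I -> F) s, (forall i, N (s i)) ->
    (mxvec (comb rho a s) <= E)%MS.
  move=> I a s Ns; rewrite /comb linear_sum; apply: summx_sub => i _.
  by rewrite linearZ scalemx_sub // hE.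
apply: (burnside_full m0).
- by case: rr => _ <-; apply: hE.
- move=> X Y hX hY; have [a ->] := dec X hX; have [b ->] := dec Y hY.
  rewrite comb_mul //; apply: inc.
  by move=> p; apply: NM.
- by move=> U hU; apply: irr => x Nx; apply: hU; apply: hE.
Qed.

End Reps.


Section GL.
Variable F : numClosedFieldType.
Variables (T : Type) (mul : T -> T -> T) (inv : T -> T) (one : T).
Hypothesis mulA : forall x y z, mul x (mul y z) = mul (mul x y) z.
Hypothesis mul1 : forall x, mul one x = x /\ mul x one = x.
Hypothesis mulV : forall x, mul (inv x) x = one /\ mul x (inv x) = one.
Variable N : T -> Prop.
Hypothesis N1 : N one.
Hypothesis NM : forall x y, N x -> N y -> N (mul x y).
Definition pc (y g : T) := mul (inv g) (mul y g).
Hypothesis Nnorm : forall g y, N y -> N (pc y g).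
Variable K : T -> Prop.
Variables (m : nat) (Th1 Th2 Pi1 Pi2 : T -> 'M[F]_m).
Hypothesis m0 : (0 < m)%N.
Hypotheses (r1 : mrep mul one N Th1) (r2 : mrep mul one N Th2).
Hypothesis tr12 : forall n, N n -> \tr (Th1 n) = \tr (Th2 n).
Hypotheses (sp1 : spanning N Th1) (sp2 : spanning N Th2).
Hypothesis P1u : forall x, K x -> Pi1 x \in unitmx.
Hypothesis P2u : forall x, K x -> Pi2 x \in unitmx.
Hypothesis P1r : forall x n, K x -> N n -> Pi1 (mul x n) = Pi1 x *m Th1 n.
Hypothesis P1l : forall x n, K x -> N n -> Pi1 (mul n x) = Th1 n *m Pi1 x.
Hypothesis P2r : forall x n, K x -> N n -> Pi2 (mul x n) = Pi2 x *m Th2 n.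
Hypothesis P2l : forall x n, K x -> N n -> Pi2 (mul n x) = Th2 n *m Pi2 x.

Lemma mul_pc n x : mul n x = mul x (pc n x).
Proof.
by rewrite /pc mulA (proj2 (mulV x)) (proj1 (mul1 _)).
Qed.

Lemma tr21 n : N n -> \tr (Th2 n) = \tr (Th1 n).
Proof. by move=> Nn; rewrite tr12. Qed.

Lemma GL x : K x -> exists c : F, c != 0 /\
  forall (I : finType) (a : I -> F) t, (forall i, N (t i)) ->
    Pi1 x = comb Th1 a t -> comb Th2 a t = c *: Pi2 x.
Proof.
move=> Kx.
have [k [s [Ns rf1]]] := sp1.
have [a0 e0] := span_coef rf1 (Pi1 x).
set Q := comb Th2 a0 s.
have comm : forall n, N n -> Th2 n *m Q = Q *m Th2 (pc n x).
  move=> n Nn; have Nn' := Nnorm x Nn.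
  have e1 : Th1 n *m Pi1 x = Pi1 x *m Th1 (pc n x).
    by rewrite -P1l // -P1r // -mul_pc.
  rewrite e0 (comb_mull _ r1) // (comb_mulr _ r1) // in e1.
  have := WD NM r1 r2 tr12 sp2 (fun i => NM Nn (Ns i)) (fun i => NM (Ns i) Nn') e1.
  by rewrite /Q (comb_mull _ r2) // (comb_mulr _ r2) // => ->.
pose Z := Q *m invmx (Pi2 x).
have cZ : forall n, N n -> Z *m Th2 n = Th2 n *m Z.
  move=> n Nn; have Nn' := Nnorm x Nn.
  have e2 : Pi2 x *m Th2 (pc n x) = Th2 n *m Pi2 x.
    by rewrite -P2l // -P2r // -mul_pc.
  have e3 : Th2 (pc n x) *m invmx (Pi2 x) = invmx (Pi2 x) *m Th2 n.
    apply: (row_full_inj (A := Pi2 x)); first by rewrite row_full_unit P2u.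
    rewrite !mulmxA e2 mulmxV ?P2u // mul1mx -!mulmxA mulmxV ?P2u //.
    by rewrite mulmx1.
  by rewrite /Z mulmxA comm // -!mulmxA e3.
have [k2 [s2 [Ns2 rf2]]] := sp2.
have cZall : forall Y, Z *m Y = Y *m Z.
  move=> Y; have [b ->] := span_coef rf2 Y.
  rewrite /comb mulmx_sumr mulmx_suml; apply: eq_bigr => i _.
  by rewrite -scalemxAr -scalemxAl cZ.
have eZ := central_scalar (Ordinal m0) cZall.
set c := Z _ _ in eZ.
have eQ : Q = c *: Pi2 x.
  by rewrite -mul_scalar_mx -eZ /Z mulmxKV ?P2u.
exists c; split.
  apply/eqP => c0; move: eQ; rewrite c0 scale0r => Q0.
  have : comb Th2 a0 s = comb Th2 (fun i : 'I_0 => 0) (fun _ => one).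
    by rewrite -/Q Q0 /comb big_ord0.
  move/(WD NM r2 r1 tr21 sp1 Ns (fun _ => N1)).
  rewrite /comb big_ord0 -/(comb Th1 a0 s) -e0 => P0.
  by move: (unit_nz m0 (P1u Kx)); rewrite P0 eqxx.
move=> I a t Nt e.
rewrite -eQ /Q; apply: (WD NM r1 r2 tr12 sp2 Nt Ns).
by rewrite -e.
Qed.


Lemma comb_scale m' (Th : T -> 'M[F]_m') (I : finType) (a : I -> F) t (k : F) :
  k *: comb Th a t = comb Th (fun i => k * a i) t.
Proof. by rewrite /comb scaler_sumr; apply: eq_bigr => i _; rewrite scalerA. Qed.

Variable c : T -> F.
Hypothesis Hc : forall x, K x -> c x != 0 /\
  forall (I : finType) (a : I -> F) t, (forall i, N (t i)) ->
    Pi1 x = comb Th1 a t -> comb Th2 a t = c x *: Pi2 x.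

Lemma GL_tr x : K x -> \tr (Pi1 x) = c x * \tr (Pi2 x).
Proof.
move=> Kx; have [k [s [Ns rf1]]] := sp1.
have [a0 e0] := span_coef rf1 (Pi1 x).
have := (proj2 (Hc Kx)) _ a0 s Ns e0.
move/(congr1 mxtrace); rewrite linearZ /= => <-.
rewrite e0 !tr_comb; apply: eq_bigr => i _; by rewrite tr12.
Qed.

Lemma GL_inv x n : K x -> N n -> K (mul x n) -> c (mul x n) = c x.
Proof.
move=> Kx Nn Kxn; have [k [s [Ns rf1]]] := sp1.
have [a0 e0] := span_coef rf1 (Pi1 x).
have e1 : Pi1 (mul x n) = comb Th1 a0 (fun i => mul (s i) n).
  by rewrite P1r // e0 (comb_mulr _ r1).
have := (proj2 (Hc Kxn)) _ a0 _ (fun i => NM (Ns i) Nn) e1.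
rewrite -(comb_mulr _ r2) // ((proj2 (Hc Kx)) _ a0 s Ns e0) -scalemxAl -P2r //.
move=> e; apply: (scalar_cancel m0 (P2u Kxn)); by rewrite e.
Qed.

Lemma GL_mul x y (al : F) : K x -> K y -> K (mul x y) -> al != 0 ->
  Pi1 x *m Pi1 y = al *: Pi1 (mul x y) ->
  Pi2 x *m Pi2 y = al *: Pi2 (mul x y) ->
  c (mul x y) = c x * c y.
Proof.
move=> Kx Ky Kxy al0 e1 e2; have [k [s [Ns rf1]]] := sp1.
have [a e0] := span_coef rf1 (Pi1 x).
have [b e0'] := span_coef rf1 (Pi1 y).
have e3 : Pi1 (mul x y) = comb Th1 (fun p : 'I_k * 'I_k => al^-1 * (a p.1 * b p.2))
                            (fun p => mul (s p.1) (s p.2)).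
  rewrite -comb_scale -(comb_mul _ _ r1) // -e0 -e0' e1 scalerA mulVf // scale1r //.
have := (proj2 (Hc Kxy)) _ _ _ (fun p => NM (Ns p.1) (Ns p.2)) e3.
rewrite -comb_scale -(comb_mul _ _ r2) // ((proj2 (Hc Kx)) _ a s Ns e0).
rewrite ((proj2 (Hc Ky)) _ b s Ns e0') -scalemxAl -scalemxAr e2 !scalerA.
move=> e; apply: (scalar_cancel m0 (P2u Kxy)); rewrite -e.
by congr (_ *: _); rewrite mulrC !mulrA mulfV // mul1r.
Qed.

End GL.


Section Key.
Variable F : numClosedFieldType.
Variables (T : Type) (mul : T -> T -> T) (inv : T -> T) (one : T).
Hypothesis mulA : forall x y z, mul x (mul y z) = mul (mul x y) z.
Hypothesis mul1 : forall x, mul one x = x /\ mul x one = x.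
Hypothesis mulV : forall x, mul (inv x) x = one /\ mul x (inv x) = one.
Variable N : T -> Prop.
Hypothesis N1 : N one.
Hypothesis NM : forall x y, N x -> N y -> N (mul x y).
Hypothesis Nnorm : forall g y, N y -> N (pc mul inv y g).
Variable K : T -> Prop.
Hypothesis K1 : K one.
Hypothesis KM : forall x y, K x -> K y -> K (mul x y).
Hypothesis NK : forall x, N x -> K x.
Variables (m : nat) (Th Pi : T -> 'M[F]_m) (al : T -> T -> F).
Hypothesis m0 : (0 < m)%N.
Hypothesis rT : mrep mul one N Th.
Hypothesis spT : spanning N Th.
Hypothesis Piu : forall x, K x -> Pi x \in unitmx.
Hypothesis Pir : forall x n, K x -> N n -> Pi (mul x n) = Pi x *m Th n.
Hypothesis Pil : forall x n, K x -> N n -> Pi (mul n x) = Th n *m Pi x.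
Hypothesis Pial : forall x y, K x -> K y -> al x y != 0 /\ Pi x *m Pi y = al x y *: Pi (mul x y).

Lemma choose_fun (P : T -> F -> Prop) : (forall x, K x -> exists c, P x c) ->
  exists c : T -> F, forall x, K x -> P x (c x).
Proof.
move=> h.
have h' : forall x, exists c, K x -> P x c.
  move=> x; case: (classic (K x)) => [Kx|nK]; first by have [c hc] := h x Kx; exists c.
  by exists 0.
exists (fun x => proj1_sig (constructive_indefinite_description _ (h' x))).
move=> x Kx; exact: (proj2_sig (constructive_indefinite_description _ (h' x)) Kx).
Qed.

Lemma exists_nz_tr x : K x -> exists n, N n /\ \tr (Pi (mul x n)) != 0.
Proof.
move=> Kx; apply: NNPP => H.
have : Pi x = 0.
  apply: (nondeg spT) => n Nn; rewrite -Pir //.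
  apply: NNPP => h; apply: H; exists n; split => //; exact/eqP.
by move=> P0; move: (unit_nz m0 (Piu Kx)); rewrite P0 eqxx.
Qed.

Lemma key_alg (eps f : T -> F) :
  (forall x y, eps (mul x y) = eps x * eps y) -> (forall x, eps x != 0) ->
  (forall x, K x -> f x != 0) -> (forall x n, K x -> N n -> f (mul x n) = f x) ->
  (forall x, K x -> \tr (Pi x) * eps x = \tr (Pi x) * f x) ->
  (forall x y, K x -> K y -> f (mul x y) = f x * f y) /\ (forall n, N n -> f n = 1).
Proof.
move=> epsM eps0 f0 fN H.
have eps1 : eps one = 1.
  have := epsM one one; rewrite (proj1 (mul1 one)) => e.
  by apply: (mulfI (eps0 one)); rewrite -e mulr1.
have [a0n Pi1] := Pial K1 K1.
set a0 := al one one in a0n Pi1.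
rewrite (proj1 (mul1 one)) in Pi1.
have ePi1 : Pi one = a0 *: 1%:M.
  apply: (row_full_inj (A := Pi one)); first by rewrite row_full_unit Piu.
  by rewrite Pi1 -scalemxAr mulmx1.
have PiN : forall n, N n -> Pi n = a0 *: Th n.
  move=> n Nn; have := Pir K1 Nn; rewrite (proj1 (mul1 n)) => ->.
  by rewrite ePi1 -scalemxAl mul1mx.
have fone : f one = 1.
  have := H one K1; rewrite ePi1 linearZ /= mxtrace1 eps1 mulr1 => e.
  have nz : a0 * m%:R != 0 by rewrite mulf_neq0 // pnatr_eq0 -lt0n.
  by apply: (mulfI nz); rewrite -e mulr1.
have trN : forall n, N n -> \tr (Th n) = \tr (eps n *: Th n).
  move=> n Nn; have := H n (NK Nn).
  rewrite -(proj1 (mul1 n)) fN // (proj1 (mul1 n)) fone PiN // linearZ /=.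
  rewrite mulr1 -mulrA => /(mulfI a0n) e.
  by rewrite linearZ /= mulrC e.
pose Th2 := fun n => eps n *: Th n.
pose Pi2 := fun x => eps x *: Pi x.
have r2 : mrep mul one N Th2.
  split; last by rewrite /Th2 eps1 scale1r (proj2 rT).
  move=> x y Nx Ny; rewrite /Th2 (proj1 rT) // epsM -scalemxAl -scalemxAr scalerA.
  by [].
have sp2 : spanning N Th2 := span_scale spT (fun n _ => eps0 n).
have P2u : forall x, K x -> Pi2 x \in unitmx.
  by move=> x Kx; rewrite /Pi2 unitmxZ ?Piu // unitfE.
have P2r : forall x n, K x -> N n -> Pi2 (mul x n) = Pi2 x *m Th2 n.
  move=> x n Kx Nn; rewrite /Pi2 /Th2 epsM Pir // -scalemxAl -scalemxAr scalerA.
  by [].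
have P2l : forall x n, K x -> N n -> Pi2 (mul n x) = Th2 n *m Pi2 x.
  move=> x n Kx Nn; rewrite /Pi2 /Th2 epsM Pil // -scalemxAl -scalemxAr scalerA.
  by rewrite mulrC.
have hGL := GL mulA mul1 mulV N1 NM Nnorm m0 rT r2 trN spT sp2 Piu P2u Pir Pil P2r P2l.
have [c Hc] := choose_fun hGL.
have ctr : forall x, K x -> \tr (Pi x) = c x * (eps x * \tr (Pi x)).
  by move=> x Kx; rewrite {1}(GL_tr trN spT Hc Kx) /Pi2 linearZ.
have cinv : forall x n, K x -> N n -> c (mul x n) = c x.
  move=> x n Kx Nn; apply: (GL_inv NM m0 rT r2 spT P2u Pir P2r Hc) => //.
  by apply: KM => //; apply: NK.
have fE : forall x, K x -> f x = (c x)^-1.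
  move=> x Kx; have [n [Nn nz]] := exists_nz_tr Kx.
  have Kxn : K (mul x n) by apply: KM => //; apply: NK.
  have e1 := H _ Kxn; have e2 := ctr _ Kxn.
  have fe : f (mul x n) = eps (mul x n) by apply: (mulfI nz); rewrite e1.
  rewrite -(fN x n) // fe -(cinv x n) //.
  have cn : c (mul x n) != 0 := proj1 (Hc _ Kxn).
  have h1 : c (mul x n) * eps (mul x n) = 1.
    by apply: (mulIf nz); rewrite mul1r -mulrA -e2.
  by apply: (mulfI cn); rewrite h1 mulfV.
split.
  move=> x y Kx Ky; have Kxy := KM Kx Ky; rewrite !fE //.
  have [a1 e1] := Pial Kx Ky.
  have e2 : Pi2 x *m Pi2 y = al x y *: Pi2 (mul x y).
    rewrite /Pi2 -scalemxAl -scalemxAr e1 !scalerA epsM.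
    by congr (_ *: _); rewrite mulrC mulrA.
  by rewrite (GL_mul NM m0 rT r2 spT P2u Hc Kx Ky Kxy a1 e1 e2) invfM.
by move=> n Nn; have := fN one n K1 Nn; rewrite (proj1 (mul1 n)) => ->.
Qed.

Lemma uniq_ext (psi : T -> F) (Th' Pi' : T -> 'M[F]_m) :
  (forall x y, psi (mul x y) = psi x * psi y) -> (forall x, psi x != 0) ->
  mrep mul one N Th' -> (forall n, N n -> \tr (Th' n) = psi n * \tr (Th n)) ->
  (forall x, K x -> Pi' x \in unitmx) ->
  (forall x n, K x -> N n -> Pi' (mul x n) = Pi' x *m Th' n) ->
  (forall x n, K x -> N n -> Pi' (mul n x) = Th' n *m Pi' x) ->
  exists f0 : T -> F, [/\ (forall x, K x -> f0 x != 0),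
    (forall x n, K x -> N n -> f0 (mul x n) = f0 x) &
    (forall x, K x -> \tr (Pi' x) = f0 x * (psi x * \tr (Pi x)))].
Proof.
move=> psiM psi0 r' tr' P'u P'r P'l.
have psi1 : psi one = 1.
  have := psiM one one; rewrite (proj1 (mul1 one)) => e.
  by apply: (mulfI (psi0 one)); rewrite -e mulr1.
pose Th1 := fun n => psi n *: Th n.
pose Pi1 := fun x => psi x *: Pi x.
have r1 : mrep mul one N Th1.
  split; last by rewrite /Th1 psi1 scale1r (proj2 rT).
  move=> x y Nx Ny; rewrite /Th1 (proj1 rT) // psiM -scalemxAl -scalemxAr scalerA.
  by [].
have sp1 : spanning N Th1 := span_scale spT (fun n _ => psi0 n).
have tr1 : forall n, N n -> \tr (Th1 n) = \tr (Th' n).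
  by move=> n Nn; rewrite tr' // /Th1 linearZ.
have sp' : spanning N Th' := transfer N1 NM r' r1 (fun n Nn => esym (tr1 n Nn)) sp1.
have P1u : forall x, K x -> Pi1 x \in unitmx.
  by move=> x Kx; rewrite /Pi1 unitmxZ ?Piu // unitfE.
have P1r : forall x n, K x -> N n -> Pi1 (mul x n) = Pi1 x *m Th1 n.
  move=> x n Kx Nn; rewrite /Pi1 /Th1 psiM Pir // -scalemxAl -scalemxAr scalerA.
  by [].
have P1l : forall x n, K x -> N n -> Pi1 (mul n x) = Th1 n *m Pi1 x.
  move=> x n Kx Nn; rewrite /Pi1 /Th1 psiM Pil // -scalemxAl -scalemxAr scalerA.
  by rewrite mulrC.
have hGL := GL mulA mul1 mulV N1 NM Nnorm m0 r1 r' tr1 sp1 sp' P1u P'u P1r P1l P'r P'l.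
have [c Hc] := choose_fun hGL.
exists (fun x => (c x)^-1); split.
- by move=> x Kx; rewrite invr_eq0; exact: (proj1 (Hc x Kx)).
- move=> x n Kx Nn; congr (_^-1).
  apply: (GL_inv NM m0 r1 r' sp1 P'u P1r P'r Hc) => //.
  by apply: KM => //; apply: NK.
move=> x Kx; have e := GL_tr tr1 sp1 Hc Kx.
have cn := proj1 (Hc x Kx).
rewrite /Pi1 linearZ /= in e.
by rewrite e mulrA mulVf // mul1r.
Qed.
End Key.

Unset Implicit Arguments.
Import ComplexField.Normc.


Section Main.
Variables (G : profiniteGroup) (R : realType).
Local Notation C := (R[i]).
Local Notation mul := (@pg_mul G).
Local Notation inv := (@pg_inv G).
Local Notation one := (@pg_one G).

Lemma gA : forall x y z : G, mul x (mul y z) = mul (mul x y) z.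
Proof. by case: (pg_axioms G). Qed.
Lemma g1 : forall x : G, mul one x = x /\ mul x one = x.
Proof. by case: (pg_axioms G). Qed.
Lemma gV : forall x : G, mul (inv x) x = one /\ mul x (inv x) = one.
Proof. by case: (pg_axioms G). Qed.
Lemma gcont : continuous (fun p : G * G => mul p.1 p.2).
Proof. by case: (pg_axioms G) => _ _ _ []. Qed.

Lemma mul1g x : mul one x = x. Proof. exact: (proj1 (g1 x)). Qed.
Lemma mulg1 x : mul x one = x. Proof. exact: (proj2 (g1 x)). Qed.
Lemma mulVg x : mul (inv x) x = one. Proof. exact: (proj1 (gV x)). Qed.
Lemma mulgV x : mul x (inv x) = one. Proof. exact: (proj2 (gV x)). Qed.

Lemma mulKg x y : mul (inv x) (mul x y) = y.
Proof. by rewrite gA mulVg mul1g. Qed.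
Lemma mulKVg x y : mul x (mul (inv x) y) = y.
Proof. by rewrite gA mulgV mul1g. Qed.

Lemma invM x y : inv (mul x y) = mul (inv y) (inv x).
Proof.
have e : mul (mul x y) (mul (inv y) (inv x)) = one.
  by rewrite -gA (gA y) mulgV mul1g mulgV.
by rewrite -[inv (mul x y)]mulg1 -e gA mulVg mul1g.
Qed.

Lemma pconjM x g h : pconj x (mul g h) = pconj (pconj x g) h.
Proof. by rewrite /pconj invM -!gA. Qed.

Lemma pconjMx x y g : pconj (mul x y) g = mul (pconj x g) (pconj y g).
Proof. by rewrite /pconj -!gA (gA g) mulgV mul1g. Qed.

Lemma mul_pconj n x : mul n x = mul x (pconj n x).
Proof. by rewrite /pconj mulKVg. Qed.

Lemma cont_mull (a : G) : continuous (fun y : G => mul a y).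
Proof.
move=> y.
have h1 : {for y, continuous (fun y : G => (a, y))}.
  by apply: cvg_pair; [exact: cvg_cst | exact: cvg_id].
exact: (@continuous_comp _ _ _ (fun y : G => (a, y)) (fun p : G * G => mul p.1 p.2) y h1 (gcont _)).
Qed.


Lemma normE (z : C) : `|z| = real_complex R (normc z). Proof. reflexivity. Qed.
Lemma ltnormE (z : C) (e : R) : (`|z| < real_complex R e) = (normc z < e).
Proof. by rewrite normE ltcR. Qed.
Lemma normc_ge0 (z : C) : 0 <= normc z.
Proof. by case: z => a b; rewrite /normc sqrtr_ge0. Qed.
Lemma normcD (z w : C) : normc (z + w) <= normc z + normc w.
Proof. exact: le_normcD. Qed.

Lemma cont_onP (A : set G) (f : G -> C) : cont_on A f <->
  forall x, A x -> forall e : R, 0 < e -> exists U : set G,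
    [/\ open U, U x & forall y, A y -> U y -> normc (f y - f x) < e].
Proof.
split=> h x Ax e e0; have [U [oU Ux hU]] := h x Ax e e0; exists U; split => //.
  by move=> y Ay Uy; rewrite -ltnormE; apply: hU.
by move=> y Ay Uy; rewrite ltnormE; apply: hU.
Qed.

Lemma cont_invN (N A : set G) (f : G -> C) : open N -> N one ->
  (forall x n, A x -> N n -> f (mul x n) = f x) -> cont_on A f.
Proof.
move=> oN N1 fN; apply/cont_onP => x Ax e e0.
exists ((fun y => mul (inv x) y) @^-1` N); split.
- by move: oN; apply: (proj1 (continuousP _) (cont_mull (inv x))).
- by rewrite /= mulVg.
- move=> y Ay /= Ny; rewrite -(mulKVg x y) fN // subrr.
  by rewrite normc0.
Qed.

Lemma cont_mul (A : set G) (f g : G -> C) : cont_on A f -> cont_on A g ->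
  cont_on A (fun x => f x * g x).
Proof.
move=> /cont_onP cf /cont_onP cg; apply/cont_onP => x Ax e e0.
set a := normc (f x); set b := normc (g x).
have a0 : 0 <= a := normc_ge0 _. have b0 : 0 <= b := normc_ge0 _.
have [U1 [oU1 U1x h1]] := cg x Ax 1 ltr01.
have d2 : 0 < e / (2 * (a + 1)) by apply: divr_gt0 => //; apply: mulr_gt0 => //; lra.
have [U2 [oU2 U2x h2]] := cg x Ax _ d2.
have d3 : 0 < e / (2 * (b + 1)) by apply: divr_gt0 => //; apply: mulr_gt0 => //; lra.
have [U3 [oU3 U3x h3]] := cf x Ax _ d3.
exists (U1 `&` U2 `&` U3); split; first by apply: openI => //; apply: openI.
  by split; [split|].
move=> y Ay [[U1y U2y] U3y].
have -> : f y * g y - f x * g x = (f y - f x) * g y + f x * (g y - g x).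
  by ring.
apply: le_lt_trans (normcD _ _) _; rewrite !normcM.
have p1 := h1 y Ay U1y; have p2 := h2 y Ay U2y; have p3 := h3 y Ay U3y.
have gy : normc (g y) < b + 1.
  have -> : g y = g x + (g y - g x) by ring.
  apply: le_lt_trans (normcD _ _) _; rewrite -/b; lra.
set p := normc (f y - f x) in p3 *; set q := normc (g y - g x) in p1 p2 gy *.
set s := normc (g y) in gy *.
have p0 : 0 <= p := normc_ge0 _. have q0 : 0 <= q := normc_ge0 _.
have s0 : 0 <= s := normc_ge0 _.
have e3 : e / (2 * (b + 1)) * (b + 1) = e / 2.
  by field; lra.
have e2 : a * (e / (2 * (a + 1))) <= e / 2.
  rewrite mulrA ler_pdivrMr; last by lra.
  by rewrite mulrC -mulrA ler_pM2l //; lra.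
have : p * s < e / (2 * (b + 1)) * (b + 1).
  apply: (le_lt_trans (y := p * (b + 1))); first by apply: ler_wpM2l => //; lra.
  by rewrite ltr_pM2r //; lra.
have : a * q <= a * (e / (2 * (a + 1))) by apply: ler_wpM2l; lra.
rewrite -/a; lra.
Qed.

Lemma cont_inv (A : set G) (f : G -> C) : cont_on A f ->
  (forall x, A x -> f x != 0) -> cont_on A (fun x => (f x)^-1).
Proof.
move=> /cont_onP cf nz; apply/cont_onP => x Ax e e0.
set a := normc (f x).
have a0 : 0 < a.
  rewrite lt_neqAle normc_ge0 andbT eq_sym; apply/eqP => /eq0_normc.
  by apply/eqP; apply: nz.
have d1 : 0 < a / 2 by lra.
have [U1 [oU1 U1x h1]] := cf x Ax _ d1.
have d2 : 0 < e * a * a / 2 by apply: divr_gt0 => //; do 2 apply: mulr_gt0 => //.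
have [U2 [oU2 U2x h2]] := cf x Ax _ d2.
exists (U1 `&` U2); split; [exact: openI | by split |].
move=> y Ay [U1y U2y].
have fy0 := nz y Ay; have fx0 := nz x Ax.
have -> : (f y)^-1 - (f x)^-1 = (f x - f y) * ((f y)^-1 * (f x)^-1).
  by field; apply/andP.
rewrite !normcM !normcV.
have p1 := h1 y Ay U1y; have p2 := h2 y Ay U2y.
have eN : normc (f x - f y) = normc (f y - f x) by rewrite -normcN opprB.
rewrite eN.
have sy : a / 2 < normc (f y).
  have : a <= normc (f y) + normc (f x - f y).
    have e1 : f y + (f x - f y) = f x by ring.
    by rewrite /a -{1}e1; apply: normcD.
  lra.
set p := normc (f y - f x) in p1 p2 eN *; set s := normc (f y) in sy *.
have s0 : 0 < s by lra.
rewrite -/a -invfM ltr_pdivrMr; last by apply: mulr_gt0.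
have h : e * a * a / 2 < e * (s * a).
  have -> : e * a * a / 2 = (e * a) * (a / 2) by ring.
  have -> : e * (s * a) = (e * a) * s by ring.
  by rewrite ltr_pM2l // mulr_gt0.
lra.
Qed.


Lemma lin1 (psi : G -> C) : is_lin_char [set: G] psi -> psi one = 1.
Proof.
case=> hM h0 _; have := hM one one I I; rewrite mul1g => e.
by apply: (mulfI (h0 one I)); rewrite -e mulr1.
Qed.

Lemma linJ (psi : G -> C) x g : is_lin_char [set: G] psi -> psi (pconj x g) = psi x.
Proof.
move=> hl; have [hM h0 _] := hl.
by rewrite /pconj !hM // mulrCA -hM // mulVg lin1 // mulr1.
Qed.

Lemma lin_mul (p1 p2 : G -> C) : is_lin_char [set: G] p1 -> is_lin_char [set: G] p2 ->
  is_lin_char [set: G] (fun x => p1 x * p2 x).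
Proof.
move=> [m1 z1 c1] [m2 z2 c2]; split.
- by move=> x y _ _; rewrite m1 // m2 // mulrACA.
- by move=> x _; rewrite mulf_neq0 ?z1 ?z2.
- exact: cont_mul.
Qed.

Lemma lin_inv (p : G -> C) : is_lin_char [set: G] p ->
  is_lin_char [set: G] (fun x => (p x)^-1).
Proof.
move=> [m1 z1 c1]; split.
- by move=> x y _ _; rewrite m1 // invfM.
- by move=> x _; rewrite invr_eq0 z1.
- exact: cont_inv.
Qed.

Lemma helper (T a b c d : C) : b != 0 -> d != 0 -> T * b * c = T * a * d ->
  T * (a / b) = T * (c / d).
Proof.
move=> b0 d0 e; apply: (mulIf (mulf_neq0 b0 d0)).
have -> : T * (a / b) * (b * d) = T * a * d by field.
have -> : T * (c / d) * (b * d) = T * b * c by field.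
by rewrite e.
Qed.

End Main.
Arguments gA {G} x y z.
Arguments g1 {G} x.
Arguments gV {G} x.
Arguments mulgV {G} x.
Arguments mulVg {G} x.
Arguments pconjM {G} x g h.
Arguments pconjMx {G} x y g.
Arguments lin_mul {G R p1 p2} _ _.
Arguments lin_inv {G R p} _.
Arguments linJ {G R psi} x g _.
Arguments helper {R T a b c d} _ _ _.
Arguments cont_invN {G R N A f} _ _ _ x _ e _.


Theorem proposition2p9 (G : profiniteGroup) (R : realType)
  (N K L : set G) (theta thetahat : G -> R[i])
  (hN : open_normal_subgroup N)
  (htheta : is_irr_char N theta)
  (hK : is_subgroup K) (hL : is_subgroup L)
  (hNK : N `<=` K) (hKst : K `<=` stab_char N theta)
  (hNL : N `<=` L) (hLst : L `<=` stab_tilde N theta)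
  (hLK : normalises L K)
  (hext : strong_ext N K theta thetahat)
  (psi mu : G -> G -> R[i])
  (hmu : mu_data N K L theta thetahat psi mu) :
  (* mu-bar is well defined on L/N *)
  (forall g n, L g -> N n ->
     eq_mod_Gamma K N thetahat (mu (pg_mul g n)) (mu g)) /\
  (* mu-bar is a 1-cocycle: mu(gh) = mu(g) . (g . mu(h))  mod Gamma *)
  (forall g h, L g -> L h ->
     eq_mod_Gamma K N thetahat (mu (pg_mul g h))
       (fun x => mu g x * mu h (pconj x g))) /\
  (* the class [mu-bar] in H^1 depends only on theta~ *)
  (forall (theta2 thetahat2 : G -> R[i]) (psi2 mu2 : G -> G -> R[i]),
     in_tilde N theta theta2 ->
     strong_ext N K theta2 thetahat2 ->
     mu_data N K L theta2 thetahat2 psi2 mu2 ->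
     exists f, in_FK K N f /\
       forall g, L g ->
         eq_mod_Gamma K N thetahat (mu2 g)
           (fun x => mu g x * f (pconj x g) / f x)).
Proof.
move: hN => [[N1 NM Ninv] oN Nnorm'].
have Nnorm : forall g y, N y -> N (pc (@pg_mul G) (@pg_inv G) y g).
  by move=> g y Ny; apply: Nnorm'.
move: hK => [K1 KM Kinv].
move: hL => [L1 LM Linv].
have [m [Pi [Th [al [[repTh affTh] Piu Pial PiN trPi]]]]] := hext.
have [m' [rho [[m'0 [rM r1 rc] rirr] aff]]] := htheta.
have mrTh : mrep (@pg_mul G) (@pg_one G) N Th by case: repTh.
have em : m' = m.
  apply/eqP; rewrite -(eqr_nat (R[i])).
  by rewrite -(mxtrace1 _ m') -(mxtrace1 _ m) -r1 -(proj2 mrTh) -aff // affTh.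
subst m'.
have sprho : spanning N rho := irr_spanning N1 NM m'0 (conj rM r1) rirr.
have spTh : spanning N Th.
  apply: (transfer N1 NM mrTh (conj rM r1)) sprho => n Nn.
  by rewrite -affTh // aff.
have Pir : forall x n, K x -> N n -> Pi (pg_mul x n) = Pi x *m Th n.
  by move=> x n Kx Nn; case: (PiN x n Kx Nn).
have Pil : forall x n, K x -> N n -> Pi (pg_mul n x) = Th n *m Pi x.
  by move=> x n Kx Nn; case: (PiN x n Kx Nn).
have gam : forall eps f, is_lin_char [set: G] eps -> in_FK K N f ->
    eqOn K (fun x => thetahat x * eps x) (fun x => thetahat x * f x) ->
    in_Gamma K N thetahat f.
  move=> eps f hl [f0 fN] H; have [eM e0 ec] := hl.
  have H' : forall x, K x -> \tr (Pi x) * eps x = \tr (Pi x) * f x.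
    by move=> x Kx; rewrite -trPi // H.
  have [fM fN1] := key_alg gA g1 gV N1 NM Nnorm K1 KM hNK m'0 mrTh spTh Piu Pir Pil Pial
    (fun x y => eM x y I I) (fun x => e0 x I) f0 fN H'.
  split; last by exists eps.
  split => //; split => //; exact: (cont_invN oN N1 fN).
have thN : forall y n, K y -> N n -> thetahat (pconj y n) = thetahat y.
  move=> y n Ky Nn; have Nin := Ninv n Nn.
  have Kyn := KM _ _ Ky (hNK _ Nn).
  rewrite !trPi //; last by apply: KM => //; apply: hNK.
  rewrite /pconj Pil // Pir // mxtrace_mulC -mulmxA -(proj1 mrTh) //.
  by rewrite mulgV (proj2 mrTh) mulmx1.
split.
  move=> g n Lg Nn.
  have Lgn : L (pg_mul g n) := LM _ _ Lg (hNL _ Nn).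
  have [pl1 th1 [mz1 mN1] ce1] := hmu g Lg.
  have [pl2 th2 [mz2 mN2] ce2] := hmu _ Lgn.
  pose nu := fun x => mu (pg_mul g n) x / mu g x.
  exists nu; split; last by move=> x Kx; rewrite /nu mulrC divfK // mz1.
  apply: (gam (fun x => psi g x / psi (pg_mul g n) x)).
  - exact: (lin_mul pl1 (lin_inv pl2)).
  - split; first by move=> x Kx; rewrite /nu mulf_neq0 ?invr_eq0 ?mz1 ?mz2.
    by move=> x n0 Kx Nn0; rewrite /nu mN1 // mN2.
  - move=> x Kx; have Kx' : K (pconj x g) by apply/(hLK g Lg x).
    have e := ce2 x Kx; move: e; rewrite /cact pconjM thN //.
    have := ce1 x Kx; rewrite /cact => -> e.
    have [_ z2 _] := pl2.
    apply: helper; [exact: z2 | exact: mz1 | by rewrite -e].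
split.
  move=> g h Lg Lh.
  have Lgh : L (pg_mul g h) := LM _ _ Lg Lh.
  have [pl1 th1 [mz1 mN1] ce1] := hmu g Lg.
  have [pl2 th2 [mz2 mN2] ce2] := hmu h Lh.
  have [pl3 th3 [mz3 mN3] ce3] := hmu _ Lgh.
  have Kc : forall x, K x -> K (pconj x g) by move=> x Kx; apply/(hLK g Lg x).
  pose nu := fun x => mu (pg_mul g h) x / (mu g x * mu h (pconj x g)).
  exists nu; split; last first.
    move=> x Kx; rewrite /nu mulrC divfK //.
    by rewrite mulf_neq0 ?mz1 ?mz2 //; apply: Kc.
  apply: (gam (fun x => psi g x * psi h x / psi (pg_mul g h) x)).
  - exact: (lin_mul (lin_mul pl1 pl2) (lin_inv pl3)).
  - split.
      move=> x Kx; rewrite /nu mulf_neq0 ?invr_eq0 ?mz3 //.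
      by rewrite mulf_neq0 ?mz1 ?mz2 //; apply: Kc.
    move=> x n Kx Nn; have Nn' : N (pconj n g) by exact: (Nnorm' g n I Nn).
    by rewrite /nu pconjMx mN2 ?mN1 ?mN3 //; apply: Kc.
  - move=> x Kx; have Kx' := Kc x Kx.
    have e := ce3 x Kx; move: e; rewrite /cact pconjM.
    have := ce2 _ Kx'; rewrite /cact => ->.
    have := ce1 x Kx; rewrite /cact => ->.
    rewrite (linJ _ _ pl2) => e.
    have [_ z3 _] := pl3.
    apply: helper; [exact: z3 | by rewrite mulf_neq0 ?mz1 ?mz2 | ].
    by rewrite -e; ring.
move=> theta2 thetahat2 psi2 mu2 [ps [psl eq2]] hext2 hmu2.
have [m2 [Pi2 [Th2 [al2 [[repTh2 affTh2] Pi2u Pi2al Pi2N trPi2]]]]] := hext2.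
have mrTh2 : mrep (@pg_mul G) (@pg_one G) N Th2 by case: repTh2.
have [psM' ps0' psc] := psl.
have psM : forall x y, ps (pg_mul x y) = ps x * ps y by move=> x y; apply: psM'.
have ps0 : forall x, ps x != 0 by move=> x; apply: ps0'.
have em : m2 = m.
  apply/eqP; rewrite -(eqr_nat (R[i])) -(mxtrace1 _ m2) -(mxtrace1 _ m).
  rewrite -(proj2 mrTh2) -(proj2 mrTh) -affTh2 // -affTh // eq2 //.
  by rewrite (@lin1 G R ps psl) mulr1.
subst m2.
have Pi2r : forall x n, K x -> N n -> Pi2 (pg_mul x n) = Pi2 x *m Th2 n.
  by move=> x n Kx Nn; case: (Pi2N x n Kx Nn).
have Pi2l : forall x n, K x -> N n -> Pi2 (pg_mul n x) = Th2 n *m Pi2 x.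
  by move=> x n Kx Nn; case: (Pi2N x n Kx Nn).
have trEq : forall n, N n -> \tr (Th2 n) = ps n * \tr (Th n).
  by move=> n Nn; rewrite -affTh2 // -affTh // eq2 // mulrC.
have [f0 [f0z f0N f0tr]] := uniq_ext gA g1 gV N1 NM Nnorm KM hNK m'0 mrTh spTh Piu Pir Pil
  psM ps0 mrTh2 trEq Pi2u Pi2r Pi2l.
have th2E : forall x, K x -> thetahat2 x = f0 x * (ps x * thetahat x).
  by move=> x Kx; rewrite trPi2 // f0tr // trPi.
exists f0; split; first by split.
move=> g Lg.
have [pl1 th1 [mz1 mN1] ce1] := hmu g Lg.
have [pl2 th2' [mz2 mN2] ce2] := hmu2 g Lg.
have Kc : forall x, K x -> K (pconj x g) by move=> x Kx; apply/(hLK g Lg x).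
pose nu := fun x => mu2 g x * f0 x / (mu g x * f0 (pconj x g)).
exists nu; split; last first.
  move=> x Kx; have z1 := mz1 x Kx; have z2 := f0z x Kx; have z3 := f0z _ (Kc x Kx).
  rewrite /nu; field.
  by rewrite z1 z2 z3.
apply: (gam (fun x => psi g x / psi2 g x)).
- exact: (lin_mul pl1 (lin_inv pl2)).
- split.
    move=> x Kx; rewrite /nu mulf_neq0 ?invr_eq0 ?mulf_neq0 ?mz1 ?mz2 ?f0z //.
    by apply: Kc.
  move=> x n Kx Nn; have Nn' : N (pconj n g) by exact: (Nnorm' g n I Nn).
  by rewrite /nu pconjMx (mN2 x n Kx Nn) (mN1 x n Kx Nn) (f0N x n Kx Nn) (f0N _ _ (Kc x Kx) Nn').
- move=> x Kx; have Kx' := Kc x Kx.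
  have e := ce2 x Kx; move: e; rewrite /cact th2E // th2E //.
  have := ce1 x Kx; rewrite /cact => ->.
  rewrite (linJ _ _ psl) => e.
  have [_ z2 _] := pl2.
  apply: helper; [exact: z2 | by rewrite mulf_neq0 ?mz1 ?f0z | ].
  apply: (mulfI (ps0 x)).
  transitivity (f0 x * (ps x * thetahat x) * psi2 g x * mu2 g x); first by ring.
  by rewrite -e; ring.
Qed.
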